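(* Let $K>0$, let $m_1,m_2\in(0,1]$, and let $f,g:[0,K]\to\mathbb{R}$ be such that $f$ is $m_1$-convex and $g$ is $m_2$-convex on $[0,K]$. Let $0\le a<b\le K$ with $a/m_1\le K$ and $a/m_2\le K$, and assume $f$, $g$ and $fg$ are integrable on $[a,b]$. Then \begin{align*} &\frac{g(b)}{(b-a)^2}\int_a^b (x-a)f(x)\,dx+m_2\frac{g(a/m_2)}{(b-a)^2}\int_a^b (b-x)f(x)\,dx\\ &\quad+\frac{f(b)}{(b-a)^2}\int_a^b (x-a)g(x)\,dx+m_1\frac{f(a/m_1)}{(b-a)^2}\int_a^b (b-x)g(x)\,dx\\ &\le \frac{1}{b-a}\int_a^b f(x)g(x)\,dx+\frac13 f(b)g(b)+\frac{m_1}{6}f\!\left(\frac{a}{m_1}\right)g(b)+\frac{m_2}{6}f(b)\,g\!\left(\frac{a}{m_2}\right)+\frac{m_1m_2}{3}f\!\left(\frac{a}{m_1}\right)g\!\left(\frac{a}{m_2}\right). \end{align*}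
   Context: For $m\in[0,1]$ and $K>0$, a function $h:[0,K]\to\mathbb{R}$ is called $m$-convex if $h(tx+m(1-t)y)\le t\,h(x)+m(1-t)\,h(y)$ for all $x,y\in[0,K]$ and $t\in[0,1]$. *)

(* Defs.v *)
From Stdlib Require Import Reals Lra ClassicalEpsilon.
Open Scope R_scope.

Definition m_convex (m K : R) (h : R -> R) : Prop :=
  forall x y t, 0 <= x <= K -> 0 <= y <= K -> 0 <= t <= 1 ->
    h (t * x + m * (1 - t) * y) <= t * h x + m * (1 - t) * h y.

(* The Riemann integral of h over [a,b] as a total function: the (Stdlib)
   Riemann integral when h is Riemann integrable on [a,b], and 0 otherwise.
   (RiemannInt does not depend on the integrability proof, RiemannInt_P5.) *)
Definition Rint (h : R -> R) (a b : R) : R :=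
  match excluded_middle_informative (inhabited (Riemann_integrable h a b)) with
  | left H => RiemannInt (epsilon H (fun _ => True))
  | right _ => 0
  end.

(* Main.v *)
Require Import Defs.
From Coquelicot Require Import Coquelicot.
From Stdlib Require Import Reals Lra ClassicalEpsilon FunctionalExtensionality.
Open Scope R_scope.

Lemma approx_int (h : R -> R) (a b : R) : a <= b ->
  (forall eps : posreal, {g : R -> R & (Riemann_integrable g a b *
     (forall x, a <= x <= b -> Rabs (h x - g x) <= eps))%type}) ->
  Riemann_integrable h a b.
Proof.
  intros Hab H eps.
  assert (He1 : 0 < eps / (2 * (b - a + 1))).
  { apply Rdiv_lt_0_compat. apply cond_pos. lra. }
  set (e1 := mkposreal _ He1).
  destruct (H e1) as [g [Ig Hg]].
  destruct (Ig e1) as [phi [psi [Hpsi Hint]]].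
  exists phi.
  exists (mkStepFun (StepFun_P28 1 psi (mkStepFun (StepFun_P4 a b e1)))).
  rewrite Rmin_left in Hpsi by lra. rewrite Rmax_right in Hpsi by lra.
  rewrite Rmin_left by lra. rewrite Rmax_right by lra.
  split.
  - intros t Ht. simpl. unfold fct_cte.
    specialize (Hpsi t Ht). specialize (Hg t Ht).
    replace (h t - phi t) with ((h t - g t) + (g t - phi t)) by ring.
    eapply Rle_trans. apply Rabs_triang. simpl in Hg. lra.
  - rewrite StepFun_P30, StepFun_P18.
    eapply Rle_lt_trans. apply Rabs_triang.
    rewrite Rmult_1_l. rewrite (Rabs_pos_eq (_ * (b - a))).
    2: { apply Rmult_le_pos. simpl. left; exact He1. lra. }
    simpl. simpl in Hint.
    assert (eps / (2 * (b - a + 1)) * (b - a + 1) = eps / 2).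
    { field. lra. }
    assert (eps / (2 * (b - a + 1)) <= eps / 2).
    { unfold Rdiv. apply Rmult_le_compat_l. left; apply cond_pos.
      apply Rinv_le_contravar; lra. }
    assert (0 < eps) by apply cond_pos.
    assert (eps / (2 * (b - a + 1)) * (b - a) < eps / 2).
    { rewrite <- H0. apply Rmult_lt_compat_l. exact He1. lra. }
    lra.
Qed.

Lemma lin_approx (f : R -> R) a b M d (Hab : a <= b)
  (If : Riemann_integrable f a b) (HM : forall x, a <= x <= b -> Rabs (f x) <= M)
  (HM0 : 0 <= M) (Hd : 0 < d) (k : nat) :
  forall u, a <= u <= b -> u - a <= INR k * d ->
  {g : R -> R & (Riemann_integrable g a u *
     (forall x, a <= x <= u -> Rabs ((x - a) * f x - g x) <= d * M))%type}.
Proof.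
  induction k as [|k IH]; intros u Hu Hk.
  - simpl in Hk. assert (u = a) by lra. subst u.
    exists (fun _ => 0). split. apply RiemannInt_P7.
    intros x Hx. assert (x = a) by lra. subst x.
    replace ((a - a) * f a - 0) with 0 by ring. rewrite Rabs_R0.
    apply Rmult_le_pos; lra.
  - set (w := Rmax a (u - d)).
    assert (Hw1 : a <= w) by apply Rmax_l.
    assert (Hw2 : u - d <= w) by apply Rmax_r.
    assert (Hw3 : w <= u). { unfold w. apply Rmax_lub; lra. }
    assert (Hw4 : w - a <= INR k * d).
    { unfold w. apply Rmax_case_strong; intros.
      - assert (0 <= INR k) by apply pos_INR. nra.
      - rewrite S_INR in Hk. lra. }
    destruct (IH w ltac:(lra) Hw4) as [g [Ig Hg]].
    exists (fun x => if Rle_dec x w then g x else (w - a) * f x).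
    split.
    + apply RiemannInt_P24 with w.
      * apply Riemann_integrable_ext with g; [|exact Ig].
        intros x Hx. rewrite Rmin_left in Hx by lra. rewrite Rmax_right in Hx by lra.
        destruct (Rle_dec x w); [reflexivity|lra].
      * apply ex_RInt_Reals_0.
        apply ex_RInt_ext with (fun x => (w - a) * f x).
        { intros x Hx. rewrite Rmin_left in Hx by lra. rewrite Rmax_right in Hx by lra.
          destruct (Rle_dec x w); [lra|reflexivity]. }
        apply ex_RInt_Reals_1. apply Riemann_integrable_scal.
        apply (@RiemannInt_P23 f a u w). apply (@RiemannInt_P22 f a b u If). lra. lra.
    + intros x Hx. destruct (Rle_dec x w) as [Hxw|Hxw].
      * apply Hg. lra.
      * replace ((x - a) * f x - (w - a) * f x) with ((x - w) * f x) by ring.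
        rewrite Rabs_mult. rewrite Rabs_pos_eq by lra.
        apply Rmult_le_compat; try lra. apply Rabs_pos. apply HM. lra.
Qed.

Lemma int_xa (f : R -> R) a b (Hab : a <= b) (If : Riemann_integrable f a b) :
  Riemann_integrable (fun x => (x - a) * f x) a b.
Proof.
  assert (Hub : exists M, forall x, a <= x <= b -> Rabs (f x) <= M).
  { destruct (ex_RInt_ub f a b (ex_RInt_Reals_1 _ _ _ If)) as [M HM].
    exists M. intros x Hx. apply (HM x). rewrite Rmin_left, Rmax_right; lra. }
  apply constructive_indefinite_description in Hub. destruct Hub as [M HM].
  assert (HM0 : 0 <= M). { eapply Rle_trans. apply Rabs_pos. apply (HM a). lra. }
  apply approx_int; [exact Hab|]. intros eps.
  assert (Hd : 0 < eps / (M + 1)). { apply Rdiv_lt_0_compat. apply cond_pos. lra. }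
  assert (HN : exists N : nat, b - a <= INR N * (eps / (M + 1))).
  { destruct (archimed_cor1 ((eps / (M + 1)) / (b - a + 1))) as [N [HN1 HN2]].
    { apply Rdiv_lt_0_compat; lra. }
    exists N. assert (0 < INR N) by (apply lt_0_INR; exact HN2).
    assert (H2 : / INR N * (b - a + 1) < eps / (M + 1)).
    { replace (eps/(M+1)) with (eps/(M+1)/(b-a+1)*(b-a+1)) by (field; lra).
      apply Rmult_lt_compat_r; lra. }
    apply Rmult_lt_compat_l with (r := INR N) in H2; [|lra].
    rewrite <- Rmult_assoc, Rinv_r, Rmult_1_l in H2 by lra. lra. }
  apply constructive_indefinite_description in HN. destruct HN as [N HN].
  destruct (lin_approx f a b M _ Hab If HM HM0 Hd N b ltac:(lra) HN) as [g [Ig Hg]].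
  exists g. split. exact Ig. intros x Hx. eapply Rle_trans. apply Hg. exact Hx.
  assert (E : eps / (M + 1) * (M + 1) = eps) by (field; lra).
  assert (eps / (M + 1) * M <= eps / (M + 1) * (M + 1)) by (apply Rmult_le_compat_l; lra).
  lra.
Qed.

Lemma Rint_eq h a b (pr : Riemann_integrable h a b) : Rint h a b = RiemannInt pr.
Proof.
  unfold Rint. destruct (excluded_middle_informative _) as [i|n].
  - apply RiemannInt_P5.
  - exfalso. apply n. exact (inhabits pr).
Qed.

Lemma Rint_plus h1 h2 a b : a <= b -> Riemann_integrable h1 a b -> Riemann_integrable h2 a b ->
  Rint (fun x => h1 x + h2 x) a b = Rint h1 a b + Rint h2 a b.
Proof.
  intros Hab p1 p2.
  rewrite (Rint_eq _ _ _ (@Riemann_integrable_plus h1 h2 a b p1 p2)), (Rint_eq _ _ _ p1), (Rint_eq _ _ _ p2).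
  rewrite (RiemannInt_P18 _ (RiemannInt_P10 1 p1 p2)).
  rewrite (RiemannInt_P13 p1 p2). ring. exact Hab. intros; ring.
Qed.

Lemma Rint_scal h c a b : Riemann_integrable h a b ->
  Rint (fun x => c * h x) a b = c * Rint h a b.
Proof.
  intros p. rewrite (Rint_eq _ _ _ (@Riemann_integrable_scal h a b c p)), (Rint_eq _ _ _ p).
  apply RiemannInt_scal.
Qed.

Lemma Rint_le h1 h2 a b : a <= b -> Riemann_integrable h1 a b -> Riemann_integrable h2 a b ->
  (forall x, a <= x <= b -> h1 x <= h2 x) -> Rint h1 a b <= Rint h2 a b.
Proof.
  intros Hab p1 p2 H. rewrite (Rint_eq _ _ _ p1), (Rint_eq _ _ _ p2).
  apply RiemannInt_P19. exact Hab. intros; apply H; lra.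
Qed.

Lemma fext (h1 h2 : R -> R) : (forall x, h1 x = h2 x) -> h1 = h2.
Proof. apply functional_extensionality. Qed.

Lemma int_bx f a b : a <= b -> Riemann_integrable f a b -> Riemann_integrable (fun x => (b - x) * f x) a b.
Proof.
  intros Hab If.
  replace (fun x => (b - x) * f x) with (fun x => (b - a) * f x - (x - a) * f x).
  2: { apply fext; intros; ring. }
  apply Riemann_integrable_minus. apply Riemann_integrable_scal. exact If.
  apply int_xa; assumption.
Qed.

Lemma is_RInt_R (P df : R -> R) a b :
  (forall x, is_derive P x (df x)) -> (forall x, continuous df x) ->
  is_RInt df a b (P b - P a).
Proof. intros H1 H2. apply (is_RInt_derive P df a b). intros; apply H1. intros; apply H2. Qed.

Theorem theorem4 (K m1 m2 a b : R) (f g : R -> R)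
  (HK : 0 < K)
  (Hm1 : 0 < m1 <= 1) (Hm2 : 0 < m2 <= 1)
  (Hf : m_convex m1 K f) (Hg : m_convex m2 K g)
  (Ha : 0 <= a) (Hab : a < b) (HbK : b <= K)
  (Ha1 : a / m1 <= K) (Ha2 : a / m2 <= K)
  (If : Riemann_integrable f a b) (Ig : Riemann_integrable g a b)
  (Ifg : Riemann_integrable (fun x => f x * g x) a b) :
  g b / (b - a) ^ 2 * Rint (fun x => (x - a) * f x) a b
  + m2 * g (a / m2) / (b - a) ^ 2 * Rint (fun x => (b - x) * f x) a b
  + f b / (b - a) ^ 2 * Rint (fun x => (x - a) * g x) a b
  + m1 * f (a / m1) / (b - a) ^ 2 * Rint (fun x => (b - x) * g x) a b
  <= 1 / (b - a) * Rint (fun x => f x * g x) a b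
     + 1 / 3 * f b * g b
     + m1 / 6 * f (a / m1) * g b
     + m2 / 6 * f b * g (a / m2)
     + m1 * m2 / 3 * f (a / m1) * g (a / m2).
Proof.
  assert (Hab' : a <= b) by lra.
  pose proof (int_xa f a b Hab' If) as P1.
  pose proof (int_bx f a b Hab' If) as P2.
  pose proof (int_xa g a b Hab' Ig) as P3.
  pose proof (int_bx g a b Hab' Ig) as P4.
  set (I1 := Rint (fun x => (x - a) * f x) a b).
  set (I2 := Rint (fun x => (b - x) * f x) a b).
  set (I3 := Rint (fun x => (x - a) * g x) a b).
  set (I4 := Rint (fun x => (b - x) * g x) a b).
  set (Ifg' := Rint (fun x => f x * g x) a b).
  set (L := b - a).
  set (Fb := f b). set (Gb := g b). set (F := f (a / m1)). set (G := g (a / m2)).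
  set (A1 := fun x => (x - a) / L * Fb + m1 * ((b - x) / L) * F).
  set (A2 := fun x => (x - a) / L * Gb + m2 * ((b - x) / L) * G).
  assert (HL : 0 < L) by (unfold L; lra).
  assert (B1 : forall x, a <= x <= b -> f x <= A1 x).
  { intros x Hx. unfold A1, Fb, F.
    assert (Ht : 0 <= (x - a) / L <= 1).
    { split. apply Rdiv_le_0_compat; lra.
      apply Rmult_le_reg_r with L; [lra|]. unfold Rdiv. rewrite Rmult_assoc, Rinv_l; unfold L; lra. }
    assert (Hy : 0 <= a / m1 <= K) by (split; [apply Rdiv_le_0_compat; lra | lra]).
    pose proof (Hf b (a / m1) ((x - a) / L) ltac:(lra) Hy Ht) as H.
    replace ((x - a) / L * b + m1 * (1 - (x - a) / L) * (a / m1)) with x in H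
      by (unfold L; field; lra).
    replace (1 - (x - a) / L) with ((b - x) / L) in H by (unfold L; field; lra).
    exact H. }
  assert (B2 : forall x, a <= x <= b -> g x <= A2 x).
  { intros x Hx. unfold A2, Gb, G.
    assert (Ht : 0 <= (x - a) / L <= 1).
    { split. apply Rdiv_le_0_compat; lra.
      apply Rmult_le_reg_r with L; [lra|]. unfold Rdiv. rewrite Rmult_assoc, Rinv_l; unfold L; lra. }
    assert (Hy : 0 <= a / m2 <= K) by (split; [apply Rdiv_le_0_compat; lra | lra]).
    pose proof (Hg b (a / m2) ((x - a) / L) ltac:(lra) Hy Ht) as H.
    replace ((x - a) / L * b + m2 * (1 - (x - a) / L) * (a / m2)) with x in H
      by (unfold L; field; lra).
    replace (1 - (x - a) / L) with ((b - x) / L) in H by (unfold L; field; lra).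
    exact H. }
  assert (PA : Riemann_integrable (fun x => A1 x * A2 x) a b).
  { apply continuity_implies_RiemannInt; [lra|]. intros x _. unfold A1, A2. reg. }
  set (h1 := fun x => Gb / L * ((x - a) * f x)).
  set (h2 := fun x => m2 * G / L * ((b - x) * f x)).
  set (h3 := fun x => Fb / L * ((x - a) * g x)).
  set (h4 := fun x => m1 * F / L * ((b - x) * g x)).
  assert (Q1 : Riemann_integrable h1 a b) by (apply Riemann_integrable_scal; exact P1).
  assert (Q2 : Riemann_integrable h2 a b) by (apply Riemann_integrable_scal; exact P2).
  assert (Q3 : Riemann_integrable h3 a b) by (apply Riemann_integrable_scal; exact P3).
  assert (Q4 : Riemann_integrable h4 a b) by (apply Riemann_integrable_scal; exact P4).
  assert (Q12 : Riemann_integrable (fun x => h1 x + h2 x) a b) by (apply Riemann_integrable_plus; assumption).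
  assert (Q34 : Riemann_integrable (fun x => h3 x + h4 x) a b) by (apply Riemann_integrable_plus; assumption).
  assert (EL : (fun x => f x * A2 x + g x * A1 x) = (fun x => (h1 x + h2 x) + (h3 x + h4 x))).
  { apply fext; intros x; unfold A1, A2, h1, h2, h3, h4. unfold Rdiv. ring. }
  assert (PL : Riemann_integrable (fun x => f x * A2 x + g x * A1 x) a b).
  { rewrite EL. apply Riemann_integrable_plus; assumption. }
  assert (HS : Rint (fun x => f x * A2 x + g x * A1 x) a b =
     Gb / L * I1 + m2 * G / L * I2 + (Fb / L * I3 + m1 * F / L * I4)).
  { rewrite EL. rewrite (Rint_plus (fun x => h1 x + h2 x) (fun x => h3 x + h4 x)) by assumption.
    rewrite (Rint_plus h1 h2) by assumption. rewrite (Rint_plus h3 h4) by assumption.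
    unfold h1, h2, h3, h4. rewrite !Rint_scal by assumption. reflexivity. }
  set (Q := L * (Fb * Gb / 3 + (Fb * (m2 * G) + m1 * F * Gb) / 6 + m1 * F * (m2 * G) / 3)).
  assert (HQ : Rint (fun x => A1 x * A2 x) a b = Q).
  { rewrite (Rint_eq _ _ _ PA), <- RInt_Reals. apply is_RInt_unique.
    set (p := Fb). set (q := m1 * F). set (r := Gb). set (s := m2 * G).
    set (P := fun x => L * (p * r * ((x - a) / L) ^ 3 / 3
        + (p * s + q * r) * (((x - a) / L) ^ 2 / 2 - ((x - a) / L) ^ 3 / 3)
        - q * s * ((b - x) / L) ^ 3 / 3)).
    replace Q with (P b - P a).
    2: { unfold P, Q, p, q, r, s, L. field. lra. }
    apply is_RInt_R.
    - intros x. unfold P. auto_derive. auto. unfold A1, A2, p, q, r, s, L. field. lra.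
    - intros x. apply continuity_pt_filterlim. unfold A1, A2. reg. }
  assert (PR : Riemann_integrable (fun x => f x * g x + A1 x * A2 x) a b)
    by (apply Riemann_integrable_plus; assumption).
  assert (Key : Gb / L * I1 + m2 * G / L * I2 + (Fb / L * I3 + m1 * F / L * I4) <= Ifg' + Q).
  { rewrite <- HS, <- HQ. unfold Ifg'.
    rewrite <- (Rint_plus (fun x => f x * g x) (fun x => A1 x * A2 x)) by assumption.
    apply Rint_le; try assumption.
    intros x Hx.
    pose proof (B1 x Hx). pose proof (B2 x Hx).
    assert (0 <= (A1 x - f x) * (A2 x - g x)) by (apply Rmult_le_pos; lra).
    nra. }
  unfold Q in Key. fold L.
  apply Rmult_le_compat_r with (r := / L) in Key; [|left; apply Rinv_0_lt_compat; lra].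
  replace (Gb / L ^ 2 * I1 + m2 * G / L ^ 2 * I2 + Fb / L ^ 2 * I3 + m1 * F / L ^ 2 * I4)
    with ((Gb / L * I1 + m2 * G / L * I2 + (Fb / L * I3 + m1 * F / L * I4)) * / L)
    by (field; lra).
  eapply Rle_trans. exact Key. right. field. lra.
Qed.
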